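(* Let $K$ be a skew field with center $P$ and an involution, $\mathcal C$ a linear category over $P$ with involution, $A$ and $B$ selfadjoint representations of $\mathcal C$ over $K$, and $f=f^\circ\in\operatorname{Aut}(A)$, $g=g^\circ\in\operatorname{Aut}(B)$. Then $A^f$ is congruent to $B^g$ if and only if $g=h^\circ fh$ for some isomorphism $h:B\to A$.
   Context: $K$ has an involution $a\mapsto\bar a$. A linear category over $P$ has $P$-vector-space Hom sets and bilinear composition; an involution on it: $u\mapsto u^*$, $(\alpha:u\to v)\mapsto(\alpha^*:v^*\to u^* )$, $u^{**}=u\ne u^*$, $\alpha^{**}=\alpha$, $(\alpha\beta)^*=\beta^*\alpha^*$, $(\alpha a)^*=\alpha^*\bar a$. Representations: functors to finite-dimensional right $K$-spaces, finite total dimension, preserving $P$-linear combinations; morphisms: natural transformations. $V^*$: semilinear forms ($\varphi(xa)=\bar a\varphi(x)$), $A^*\varphi=\varphi A$, $V^{**}=V$. $A^\circ_u=(A_{u^*})^*$, $A^\circ_\alpha=(A_{\alpha^*})^*$, $f^\circ_u=(f_{u^*})^*$. Selfadjoint: $A=A^\circ$; congruence: isomorphism $\varphi$ of selfadjoint representations with $\varphi^\circ=\varphi^{-1}$. Fix a partition of the objects into $S_0$ and $S_0^*$. For selfadjoint $A$ and automorphism $f=f^\circ$ of $A$: $\tilde f_v=f_v$, $\tilde f_{v^*}=1$ for $v\in S_0$, and $A^f$ is the selfadjoint representation with $A^f_v=A_v$ for all objects $v$ and $A^f_\alpha=\tilde f_v^{-1}A_\alpha\tilde f_u$ for $\alpha:u\to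 v$. *)

(* Defs.v *)
From Stdlib Require Import List.
From HB Require Import structures.
From mathcomp Require Import all_boot all_order all_algebra.
Set Implicit Arguments. Unset Strict Implicit. Unset Printing Implicit Defensive.
Import GRing.Theory.
Local Open Scope ring_scope.

Definition is_skew_field (K : unitRingType) := forall x : K, x != 0 -> x \is a GRing.unit.

Definition is_ring_involution (K : unitRingType) (conj : K -> K) :=
  [/\ forall a b, conj (a + b) = conj a + conj b,
      forall a b, conj (a * b) = conj b * conj a
    & forall a, conj (conj a) = a].

Definition is_center_embedding (P : fieldType) (K : unitRingType)
    (iota : {rmorphism P -> K}) :=
  forall x : K, (forall y : K, x * y = y * x) <-> exists a : P, x = iota a.

(* A linear category over P with involution (pconj = the involution of K restricted to P). *)
Record linCatInv (P : fieldType) (pconj : P -> P) := LinCatInv {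
  Obj : Type;
  Hom : Obj -> Obj -> lmodType P;
  comp : forall u v w, Hom v w -> Hom u v -> Hom u w;
  idm : forall u, Hom u u;
  compA : forall u v w x (al : Hom w x) (be : Hom v w) (ga : Hom u v),
      comp al (comp be ga) = comp (comp al be) ga;
  comp1m : forall u v (al : Hom u v), comp (idm v) al = al;
  compm1 : forall u v (al : Hom u v), comp al (idm u) = al;
  compDl : forall u v w (a : P) (al be : Hom v w) (ga : Hom u v),
      comp (a *: al + be) ga = a *: comp al ga + comp be ga;
  compDr : forall u v w (a : P) (al : Hom v w) (be ga : Hom u v),
      comp al (a *: be + ga) = a *: comp al be + comp al ga;
  ostar : Obj -> Obj;
  ostarK : forall u, ostar (ostar u) = u;
  ostar_neq : forall u, ostar u <> u;
  mstar : forall u v, Hom u v -> Hom (ostar v) (ostar u);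
  mstarK : forall u v (al : Hom u v),
      existT (fun p : Obj * Obj => (Hom p.1 p.2 : Type)) (ostar (ostar u), ostar (ostar v))
        (mstar (mstar al))
      = existT (fun p : Obj * Obj => (Hom p.1 p.2 : Type)) (u, v) al;
  mstarM : forall u v w (al : Hom v w) (be : Hom u v),
      mstar (comp al be) = comp (mstar be) (mstar al);
  mstar_semilinear : forall u v (a : P) (al be : Hom u v),
      mstar (a *: al + be) = pconj a *: mstar al + mstar be
}.


Arguments Hom {P pconj} l _ _.
Arguments idm {P pconj} l _.
Arguments ostar {P pconj} l _.

Section Reps.
Variables (K : unitRingType) (P : fieldType) (pconj : P -> P) (C : linCatInv pconj).

(* Representation data: the space at u is the right K-space K^(rdim u) of columns,
   K-linear maps are matrices acting on the left. *)
Record prep := Prep {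
  rdim : Obj C -> nat;
  rmap : forall u v, Hom C u v -> 'M[K]_(rdim v, rdim u)
}.

Definition is_rep (iota : {rmorphism P -> K}) (A : prep) :=
  [/\ (forall u v w (al : Hom C v w) (be : Hom C u v),
         rmap A (comp al be) = rmap A al *m rmap A be),
      (forall u, rmap A (idm C u) = 1%:M),
      (forall u v (a : P) (al be : Hom C u v),
         rmap A (a *: al + be) = iota a *: rmap A al + rmap A be)
    & exists s : list (Obj C), forall u, rdim A u <> 0%N -> In u s].

Variable conj : K -> K.

(* Matrix of A^* : W^* -> V^* for A : V -> W, in the dual coordinates
   (a semilinear form x |-> sum_i conj(x_i) c_i is identified with c). *)
Definition mxstar m n (M : 'M[K]_(m, n)) : 'M[K]_(n, m) := map_mx conj M^T.

Definition mxheq m n p q (M : 'M[K]_(m, n)) (N : 'M[K]_(p, q)) :=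
  exists e : (m = p) * (n = q), castmx e M = N.

Definition is_natural (A B : prep) (phi : forall u, 'M[K]_(rdim B u, rdim A u)) :=
  forall u v (al : Hom C u v), phi v *m rmap A al = rmap B al *m phi u.

Definition is_inverse_nat (A B : prep) (phi : forall u, 'M[K]_(rdim B u, rdim A u))
    (psi : forall u, 'M[K]_(rdim A u, rdim B u)) :=
  forall u, phi u *m psi u = 1%:M /\ psi u *m phi u = 1%:M.

(* psi = phi^o, where phi^o_u = (phi_{u^*})^* (under A = A^o, B = B^o). *)
Definition is_circ (A B : prep) (phi : forall u, 'M[K]_(rdim B u, rdim A u))
    (psi : forall u, 'M[K]_(rdim A u, rdim B u)) :=
  forall u, mxheq (mxstar (phi (ostar C u))) (psi u).

Definition selfadjoint (A : prep) :=
  (forall u, rdim A (ostar C u) = rdim A u) /\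
  forall u v (al : Hom C u v), mxheq (mxstar (rmap A (mstar al))) (rmap A al).

Definition congruent (A B : prep) :=
  exists (phi : forall u, 'M[K]_(rdim B u, rdim A u)) (psi : forall u, 'M[K]_(rdim A u, rdim B u)),
    [/\ is_natural phi, is_inverse_nat phi psi & is_circ phi psi].

Definition is_partition (S0 : pred (Obj C)) := forall u, S0 (ostar C u) = ~~ S0 u.

Definition twist (S0 : pred (Obj C)) (A : prep) (f finv : forall u, 'M[K]_(rdim A u)) : prep :=
  @Prep (rdim A) (fun u v al =>
    (if S0 v then finv v else 1%:M) *m rmap A al *m (if S0 u then f u else 1%:M)).

End Reps.

(* Main.v *)
Require Import Defs.
From HB Require Import structures.
From mathcomp Require Import all_boot all_order all_algebra.
Set Implicit Arguments. Unset Strict Implicit. Unset Printing Implicit Defensive.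
Import GRing.Theory.
Local Open Scope ring_scope.

Section H.
Variable K : unitRingType.

Lemma heqE m n (M N : 'M[K]_(m,n)) : mxheq M N -> M = N.
Proof. by case=> e <-; rewrite castmx_id. Qed.

Lemma heq_refl m n (M : 'M[K]_(m,n)) : mxheq M M.
Proof. by exists (erefl, erefl); rewrite castmx_id. Qed.

Lemma heq_sym m n p q (M : 'M[K]_(m,n)) (N : 'M[K]_(p,q)) : mxheq M N -> mxheq N M.
Proof. case=> [[e1 e2]] <-; subst; rewrite castmx_id; exact: heq_refl. Qed.

Lemma heq_trans m n p q r s (M : 'M[K]_(m,n)) (N : 'M[K]_(p,q)) (L : 'M[K]_(r,s)) :
  mxheq M N -> mxheq N L -> mxheq M L.
Proof.
case=> [[e1 e2]] <-; subst; rewrite castmx_id.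
case=> [[e1 e2]] <-; subst; rewrite castmx_id; exact: heq_refl.
Qed.

Lemma heq_mul m n p m' n' p' (M : 'M[K]_(m,n)) (N : 'M[K]_(n,p))
  (M' : 'M[K]_(m',n')) (N' : 'M[K]_(n',p')) :
  mxheq M M' -> mxheq N N' -> mxheq (M *m N) (M' *m N').
Proof.
case=> [[e1 e2]] <-; subst; rewrite castmx_id.
case=> [[e1 e2]] <-; subst; rewrite !castmx_id; exact: heq_refl.
Qed.

Lemma heq_inv m n p q (M : 'M[K]_(m,n)) (N : 'M[K]_(n,m)) (M' : 'M[K]_(p,q)) (N' : 'M[K]_(q,p)) :
  mxheq M M' -> N *m M = 1%:M -> M' *m N' = 1%:M -> mxheq N N'.
Proof.
case=> [[e1 e2]] <-; subst; rewrite castmx_id => NM MN.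
have -> : N' = N by rewrite -[N']mul1mx -NM -mulmxA MN mulmx1.
exact: heq_refl.
Qed.

Lemma heq_fam (T : Type) (a b : T -> nat) (F : forall u, 'M[K]_(a u, b u)) w u :
  w = u -> mxheq (F w) (F u).
Proof. by move=> ->; exact: heq_refl. Qed.

Variable conj : K -> K.
Hypothesis Hc : is_ring_involution conj.

Lemma conjD a b : conj (a + b) = conj a + conj b. Proof. by case: Hc. Qed.
Lemma conjM a b : conj (a * b) = conj b * conj a. Proof. by case: Hc. Qed.
Lemma conjK a : conj (conj a) = a. Proof. by case: Hc. Qed.
Lemma conj0 : conj 0 = 0.
Proof. by apply: (@addrI _ (conj 0)); rewrite -conjD !addr0. Qed.
Lemma conj1 : conj 1 = 1.
Proof.
have h y : conj 1 * y = y by rewrite -[y]conjK -conjM mulr1.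
by rewrite -[conj 1]mulr1 h.
Qed.

Lemma starM m n p (M : 'M[K]_(m,n)) (N : 'M[K]_(n,p)) :
  mxstar conj (M *m N) = mxstar conj N *m mxstar conj M.
Proof.
apply/matrixP=> i k; rewrite !mxE (big_morph conj conjD conj0).
by apply: eq_bigr => j _; rewrite !mxE conjM.
Qed.

Lemma star1 n : mxstar conj (1%:M : 'M[K]_n) = 1%:M.
Proof. apply/matrixP=> i j; rewrite !mxE eq_sym; case: (_ == _); by rewrite ?conj1 ?conj0. Qed.

Lemma starK m n (M : 'M[K]_(m,n)) : mxstar conj (mxstar conj M) = M.
Proof. by apply/matrixP=> i j; rewrite !mxE conjK. Qed.

Lemma heq_star m n p q (M : 'M[K]_(m,n)) (N : 'M[K]_(p,q)) :
  mxheq M N -> mxheq (mxstar conj M) (mxstar conj N).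
Proof. case=> [[e1 e2]] <-; subst; rewrite castmx_id; exact: heq_refl. Qed.

End H.

Section N.
Variables (K : unitRingType) (P : fieldType) (pconj : P -> P) (C : linCatInv pconj).
Implicit Types A B D X : prep K C.

Lemma nat_comp A B D (p : forall u, 'M[K]_(rdim B u, rdim A u)) (q : forall u, 'M[K]_(rdim D u, rdim B u)) :
  is_natural p -> is_natural q -> is_natural (fun u => q u *m p u).
Proof. by move=> hp hq u v al; rewrite -mulmxA hp !mulmxA hq. Qed.

Lemma nat_inv A B (p : forall u, 'M[K]_(rdim B u, rdim A u)) (p' : forall u, 'M[K]_(rdim A u, rdim B u)) :
  is_natural p -> is_inverse_nat p p' -> is_natural p'.
Proof.
move=> hp hi u v al.
rewrite -[LHS]mulmx1 -(proj1 (hi u)) mulmxA -(mulmxA (p' v)) -hp mulmxA (proj2 (hi v)) mul1mx.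
by [].
Qed.

Variable S0 : pred (Obj C).
Variables (X : prep K C) (x xi : forall u, 'M[K]_(rdim X u)).
Hypotheses (hx : is_natural x) (hxi : is_inverse_nat x xi).
Let hxin : is_natural xi := nat_inv hx hxi.

Lemma Ta : is_natural (A := twist S0 x xi) (B := X) (fun u => if S0 u then x u else 1%:M).
Proof.
move=> u v al /=; case: (S0 v); rewrite ?mul1mx // !mulmxA (proj1 (hxi v)) mul1mx //.
Qed.

Lemma Tb : is_natural (A := X) (B := twist S0 x xi) (fun u => if S0 u then xi u else 1%:M).
Proof.
move=> u v al /=; rewrite -mulmxA.
have -> : ((if S0 u then x u else 1%:M) *m (if S0 u then xi u else 1%:M)) = 1%:M.
  by case: (S0 u); rewrite ?mul1mx // (proj1 (hxi u)).
by rewrite mulmx1.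
Qed.

Lemma Tc : is_natural (A := X) (B := twist S0 x xi) (fun u => if S0 u then 1%:M else x u).
Proof.
move=> u v al /=; rewrite -mulmxA.
have -> : ((if S0 u then x u else 1%:M) *m (if S0 u then 1%:M else x u)) = x u.
  by case: (S0 u); rewrite ?mul1mx ?mulmx1.
rewrite -mulmxA -hx mulmxA.
by case: (S0 v); rewrite ?mul1mx // (proj2 (hxi v)) mul1mx.
Qed.

Lemma Td : is_natural (A := twist S0 x xi) (B := X) (fun u => if S0 u then 1%:M else xi u).
Proof.
move=> u v al /=; rewrite !mulmxA.
have -> : ((if S0 v then 1%:M else xi v) *m (if S0 v then xi v else 1%:M)) = xi v.
  by case: (S0 v); rewrite ?mul1mx ?mulmx1.
rewrite hxin -mulmxA.
by case: (S0 u); rewrite ?mul1mx ?mulmx1 // (proj2 (hxi u)) mulmx1.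
Qed.

End N.

Section S.
Variables (K : unitRingType) (conj : K -> K) (P : fieldType) (pconj : P -> P) (C : linCatInv pconj).
Hypothesis Hc : is_ring_involution conj.

Lemma circ_swap (A B : prep K C) (p : forall u, 'M[K]_(rdim B u, rdim A u))
  (q : forall u, 'M[K]_(rdim A u, rdim B u)) :
  is_circ conj p q -> forall u, mxheq (mxstar conj (q (ostar C u))) (p u).
Proof.
move=> h u; have := heq_star conj (h (ostar C u)); rewrite (starK Hc) => h1.
apply: heq_trans (heq_sym h1) _; apply: heq_fam; exact: ostarK.
Qed.

Lemma circ_inv (A : prep K C) (x xi : forall u, 'M[K]_(rdim A u)) :
  is_circ conj x x -> is_inverse_nat x xi -> forall u, mxheq (mxstar conj (xi (ostar C u))) (xi u).
Proof.
move=> h hi u; apply: heq_inv (h u) _ (proj1 (hi u)).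
by rewrite -(starM Hc) (proj1 (hi _)) (star1 Hc).
Qed.
End S.

Lemma canc (K : unitRingType) m n p (X : 'M[K]_(m,n)) (A : 'M[K]_(n,p)) (B : 'M[K]_(p,n)) :
  A *m B = 1%:M -> X *m A *m B = X.
Proof. by move=> h; rewrite -mulmxA h mulmx1. Qed.

Theorem lemma3 (K : unitRingType) (conj : K -> K) (P : fieldType)
    (iota : {rmorphism P -> K}) (pconj : P -> P) (C : linCatInv pconj)
    (S0 : pred (Obj C)) (A B : prep K C)
    (f finv : forall u, 'M[K]_(rdim A u)) (g ginv : forall u, 'M[K]_(rdim B u)) :
  is_skew_field K -> is_ring_involution conj -> is_center_embedding iota ->
  (forall a : P, iota (pconj a) = conj (iota a)) ->
  is_partition S0 ->
  is_rep iota A -> is_rep iota B -> selfadjoint conj A -> selfadjoint conj B ->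
  is_natural f -> is_inverse_nat f finv -> is_circ conj f f ->
  is_natural g -> is_inverse_nat g ginv -> is_circ conj g g ->
  (congruent conj (twist S0 f finv) (twist S0 g ginv) <->
   exists (h : forall u, 'M[K]_(rdim A u, rdim B u))
          (hinv : forall u, 'M[K]_(rdim B u, rdim A u))
          (hc : forall u, 'M[K]_(rdim B u, rdim A u)),
     [/\ is_natural h, is_inverse_nat h hinv, is_circ conj h hc
       & forall u, g u = hc u *m f u *m h u]).
Proof.
move=> _ Hc _ _ Hpart _ _ _ _ fn fi fc gn gi gc.
have fin := nat_inv fn fi; have gin := nat_inv gn gi.
split.
- case=> phi [psi [phn phi_i phc]].
  have psn := nat_inv phn phi_i.
  exists (fun u => (if S0 u then 1%:M else finv u) *m (psi u *m (if S0 u then 1%:M else g u))).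
  exists (fun u => (if S0 u then 1%:M else ginv u) *m (phi u *m (if S0 u then 1%:M else f u))).
  exists (fun u => (if S0 u then g u else 1%:M) *m (phi u *m (if S0 u then finv u else 1%:M))).
  split.
  + exact: nat_comp (nat_comp (Tc S0 gn gi) psn) (Td S0 fn fi).
  + move=> u; case: (S0 u); rewrite ?mul1mx ?mulmx1; first by case: (phi_i u) => h1 h2; split.
    rewrite !mulmxA (canc _ (proj1 (gi u))) (canc _ (proj2 (phi_i u))) (proj2 (fi u)).
    rewrite (canc _ (proj1 (fi u))) (canc _ (proj1 (phi_i u))) (proj2 (gi u)); by [].
  + move=> u /=; rewrite Hpart; case: (S0 u); rewrite /= ?mul1mx ?mulmx1.
      rewrite !(starM Hc) !mulmxA; apply: (heq_mul _ (circ_inv Hc fc fi u)).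
      apply: (heq_mul (gc u)).
      exact (circ_swap Hc phc u).
    exact (circ_swap Hc phc u).
  + move=> u; case: (S0 u); rewrite ?mul1mx ?mulmx1.
      by rewrite !mulmxA (canc _ (proj2 (fi u))) (canc _ (proj1 (phi_i u))).
    by rewrite !mulmxA (canc _ (proj1 (fi u))) (proj1 (phi_i u)) mul1mx.
- case=> k [kinv [kc [kn ki kcirc kg]]].
  have kin := nat_inv kn ki.
  have kce u : kc u = g u *m (kinv u *m finv u).
    by rewrite kg !mulmxA (canc _ (proj1 (ki u))) (canc _ (proj1 (fi u))).
  have kcn : is_natural kc.
    move=> u v al; rewrite !kce; exact: (nat_comp (nat_comp fin kin) gn) u v al.
  exists (fun u => (if S0 u then ginv u else 1%:M) *m (kc u *m (if S0 u then f u else 1%:M))).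
  exists (fun u => (if S0 u then 1%:M else f u) *m (k u *m (if S0 u then 1%:M else ginv u))).
  split.
  + exact (nat_comp (nat_comp (Ta S0 fi) kcn) (Tb S0 gi)).
  + move=> u; rewrite kce; case: (S0 u); rewrite ?mul1mx ?mulmx1 !mulmxA.
      split.
        by rewrite (proj2 (gi u)) mul1mx (canc _ (proj2 (fi u))) (proj2 (ki u)).
      by rewrite (canc _ (proj2 (gi u))) (proj1 (ki u)) mul1mx (proj2 (fi u)).
    split.
      by rewrite (canc _ (proj2 (fi u))) (canc _ (proj2 (ki u))) (proj1 (gi u)).
    by rewrite (canc _ (proj2 (gi u))) (canc _ (proj1 (ki u))) (proj1 (fi u)).
  + move=> u /=; rewrite Hpart; case: (S0 u); rewrite /= ?mul1mx ?mulmx1.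
      exact (circ_swap Hc kcirc u).
    rewrite !(starM Hc) !mulmxA; apply: (heq_mul _ (circ_inv Hc gc gi u)).
    apply: (heq_mul (fc u)); exact (circ_swap Hc kcirc u).
Qed.
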